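(* Let $m,n,p\ge 1$, let $B\in\mathbb{R}^{m\times n}$ (standing for the current warped image $D\circ\tau$), let $J:\mathbb{R}^p\to\mathbb{R}^{m\times n}$ be a linear map with adjoint $J^*$ such that $J^*J$ is invertible, and let $\lambda>0$, $\sigma>0$. Define, for $X,E\in\mathbb{R}^{m\times n}$, $\Delta\tau\in\mathbb{R}^p$, $Y\in\mathbb{R}^{m\times n}$, $$\mathcal{L}_\sigma(X,E,\Delta\tau;Y)=\|X\|_*+\lambda\|E\|_1+\langle Y,B+J\Delta\tau-X-E\rangle+\tfrac{\sigma}{2}\|B+J\Delta\tau-X-E\|_F^2 .$$ Fix $X^{k+1},E^k,Y^k\in\mathbb{R}^{m\times n}$ and $\Delta\tau^k\in\mathbb{R}^p$, and define successively $$\Delta\tau^{k+1/2}=\operatorname{argmin}_{\Delta\tau}\mathcal{L}_\sigma(X^{k+1},E^k,\Delta\tau;Y^k),\quad E^{k+1}=\operatorname{argmin}_{E}\mathcal{L}_\sigma(X^{k+1},E,\Delta\tau^{k+1/2};Y^k),$$ $$\Delta\tau^{k+1}=\operatorname{argmin}_{\Delta\tau}\mathcal{L}_\sigma(X^{k+1},E^{k+1},\Delta\tau;Y^k).$$ Let $\mathcal{T}$ be the self-adjoint positive semidefinite linear operator on $\mathbb{R}^{m\times n}\times\mathbb{R}^p$ given by $\mathcal{T}(E,\Delta\tau)=\big(J(J^*J)^{-1}J^*E,\,0\big)$, and $\|w\|_{\mathcal{T}}^2=\langle w,\mathcal{T}w\rangle$. Then $$(E^{k+1},\Delta\tau^{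k+1})=\operatorname{argmin}_{E,\Delta\tau}\Big\{\mathcal{L}_\sigma(X^{k+1},E,\Delta\tau;Y^k)+\tfrac{\sigma}{2}\big\|(E,\Delta\tau)-(E^k,\Delta\tau^k)\big\|_{\mathcal{T}}^2\Big\}.$$
   Context: $\|X\|_*$ is the nuclear norm (sum of singular values), $\|E\|_1$ the sum of absolute values of entries, $\|\cdot\|_F$ the Frobenius norm, and $\langle\cdot,\cdot\rangle$ the trace inner product. All argmins above have unique minimizers. *)

(* Defs.v *)
From HB Require Import structures.
From mathcomp Require Import all_boot all_order all_algebra.
From mathcomp Require Import boolp classical_sets reals.
Set Implicit Arguments. Unset Strict Implicit. Unset Printing Implicit Defensive.
Import Order.TTheory GRing.Theory Num.Theory.
Local Open Scope ring_scope.

Section Defs.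
Variable R : realType.

(* trace inner product <A,B> = tr(A^T B) = sum_ij A_ij B_ij *)
Definition mdot (m n : nat) (A B : 'M[R]_(m, n)) : R :=
  \sum_(i < m) \sum_(j < n) A i j * B i j.

Definition frob2 (m n : nat) (A : 'M[R]_(m, n)) : R := mdot A A.

Definition l1norm (m n : nat) (A : 'M[R]_(m, n)) : R :=
  \sum_(i < m) \sum_(j < n) `|A i j|.

Definition psd (n : nat) (S : 'M[R]_n) : Prop :=
  S^T = S /\ forall v : 'cV[R]_n, 0 <= (v^T *m S *m v) 0 0.

(* the (unique) PSD square root of X^T X *)
Definition absmx (m n : nat) (X : 'M[R]_(m, n)) : 'M[R]_n :=
  xget 0 [set S : 'M[R]_n | psd S /\ S *m S = X^T *m X].

(* nuclear norm = sum of singular values = tr (sqrt (X^T X)) *)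
Definition nucnorm (m n : nat) (X : 'M[R]_(m, n)) : R := \tr (absmx X).

Definition augL (m n p : nat) (B : 'M[R]_(m, n))
  (J : 'cV[R]_p -> 'M[R]_(m, n)) (lam sigma : R)
  (X E : 'M[R]_(m, n)) (dtau : 'cV[R]_p) (Y : 'M[R]_(m, n)) : R :=
  let C := B + J dtau - X - E in
  nucnorm X + lam * l1norm E + mdot Y C + sigma / 2 * frob2 C.

Definition is_min (T : Type) (f : T -> R) (x : T) : Prop :=
  forall y, f x <= f y.

Definition is_argmin (T : Type) (f : T -> R) (x : T) : Prop :=
  is_min f x /\ forall y, f y <= f x -> y = x.

End Defs.

(* Main.v *)
Require Import Defs.
From HB Require Import structures.
From mathcomp Require Import all_boot all_order all_algebra.
From mathcomp Require Import boolp classical_sets reals.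
From mathcomp Require Import ring lra.
Import Order.TTheory GRing.Theory Num.Theory.
Local Open Scope ring_scope.

Lemma mdotC {R : realType} {m n : nat} (A B : 'M[R]_(m, n)) : mdot A B = mdot B A.
Proof. by rewrite /mdot; apply: eq_bigr=> i _; apply: eq_bigr=> j _; rewrite mulrC. Qed.

Lemma mdotDr {R : realType} {m n : nat} (A B C : 'M[R]_(m, n)) :
  mdot A (B + C) = mdot A B + mdot A C.
Proof.
rewrite /mdot -big_split; apply: eq_bigr=> i _; rewrite -big_split.
by apply: eq_bigr=> j _; rewrite mxE mulrDr.
Qed.

Lemma mdotNr {R : realType} {m n : nat} (A B : 'M[R]_(m, n)) : mdot A (- B) = - mdot A B.
Proof.
rewrite /mdot -sumrN; apply: eq_bigr=> i _; rewrite -sumrN.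
by apply: eq_bigr=> j _; rewrite mxE mulrN.
Qed.

Lemma mdotZr {R : realType} {m n : nat} (a : R) (A B : 'M[R]_(m, n)) :
  mdot A (a *: B) = a * mdot A B.
Proof.
rewrite /mdot mulr_sumr; apply: eq_bigr=> i _; rewrite mulr_sumr.
by apply: eq_bigr=> j _; rewrite mxE mulrCA.
Qed.

Lemma mdot0r {R : realType} {m n : nat} (A : 'M[R]_(m, n)) : mdot A 0 = 0.
Proof. by rewrite /mdot big1 // => i _; rewrite big1 // => j _; rewrite mxE mulr0. Qed.

Lemma mdotDl {R : realType} {m n : nat} (A B C : 'M[R]_(m, n)) :
  mdot (B + C) A = mdot B A + mdot C A.
Proof. by rewrite mdotC mdotDr !(mdotC A). Qed.

Lemma mdotNl {R : realType} {m n : nat} (A B : 'M[R]_(m, n)) : mdot (- B) A = - mdot B A.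
Proof. by rewrite mdotC mdotNr mdotC. Qed.

Lemma mdotZl {R : realType} {m n : nat} (a : R) (A B : 'M[R]_(m, n)) :
  mdot (a *: B) A = a * mdot B A.
Proof. by rewrite mdotC mdotZr mdotC. Qed.

Lemma mdot_ge0 {R : realType} {m n : nat} (A : 'M[R]_(m, n)) : 0 <= mdot A A.
Proof.
by apply: sumr_ge0=> i _; apply: sumr_ge0=> j _; rewrite -expr2 sqr_ge0.
Qed.

Theorem lemma1 (R : realType) (m n p : nat)
  (hm : (0 < m)%N) (hn : (0 < n)%N) (hp : (0 < p)%N)
  (B : 'M[R]_(m, n))
  (J : {linear 'cV[R]_p -> 'M[R]_(m, n)})
  (Jadj : {linear 'M[R]_(m, n) -> 'cV[R]_p})
  (hadj : forall (t : 'cV[R]_p) (M : 'M[R]_(m, n)), mdot (J t) M = mdot t (Jadj M))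
  (Ginv : 'cV[R]_p -> 'cV[R]_p)
  (hGinvl : forall t, Ginv (Jadj (J t)) = t)
  (hGinvr : forall t, Jadj (J (Ginv t)) = t)
  (lam sigma : R) (hlam : 0 < lam) (hsigma : 0 < sigma)
  (X1 Ek Yk : 'M[R]_(m, n)) (tauk : 'cV[R]_p)
  (tauh : 'cV[R]_p) (E1 : 'M[R]_(m, n)) (tau1 : 'cV[R]_p)
  (htauh : is_argmin (fun t => augL B J lam sigma X1 Ek t Yk) tauh)
  (hE1 : is_argmin (fun E => augL B J lam sigma X1 E tauh Yk) E1)
  (htau1 : is_argmin (fun t => augL B J lam sigma X1 E1 t Yk) tau1) :
  let Tnorm2 (E : 'M[R]_(m, n)) (t : 'cV[R]_p) :=
    (* <(E,t), T(E,t)> with T(E,t) = (J (J^*J)^{-1} J^* E, 0) *)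
    mdot E (J (Ginv (Jadj E))) + mdot t 0 in
  is_argmin (fun w : 'M[R]_(m, n) * 'cV[R]_p =>
      augL B J lam sigma X1 w.1 w.2 Yk
      + sigma / 2 * Tnorm2 (w.1 - Ek) (w.2 - tauk))
    (E1, tau1).
Proof.
move=> Tn.
pose u := sigma^-1 *: Yk + (B - X1).
pose ts := fun E => Ginv (Jadj (E - u)).
pose C := fun E t => B + J t - X1 - E.
pose q := fun M => mdot Yk M + sigma / 2 * mdot M M.
pose aug := fun E t => augL B J lam sigma X1 E t Yk.
have augE : forall E t, aug E t = nucnorm X1 + lam * l1norm E + q (C E t).
  by move=> E t; rewrite /aug /augL /frob2 /q /C /= addrA.
have sig0 : sigma != 0 by rewrite gt_eqF.
have Ko : forall E, Jadj (Yk + sigma *: C E (ts E)) = 0.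
  move=> E; have -> : Yk + sigma *: C E (ts E) = sigma *: (J (ts E) - (E - u)).
    apply/matrixP=> i j; rewrite /u /C !mxE; field; exact: sig0.
  by rewrite linearZ /= raddfB /ts /= (hGinvr (Jadj (E - u))) subrr scaler0.
have Qlem : forall E s, q (C E s) = q (C E (ts E))
    + sigma / 2 * mdot (J (s - ts E)) (J (s - ts E)).
  move=> E s; have -> : C E s = C E (ts E) + J (s - ts E).
    by rewrite raddfB /C; apply/matrixP=> i j; rewrite !mxE; ring.
  set M := J (s - ts E); set C1 := C E (ts E).
  have h0 : mdot Yk M + sigma * mdot C1 M = 0.
    by rewrite -mdotZl -mdotDl /M mdotC hadj Ko mdot0r.
  have e : mdot Yk M = - (sigma * mdot C1 M) by apply/eqP; rewrite -addr_eq0 h0.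
  clearbody M C1; rewrite /q !mdotDr !mdotDl (mdotC M C1) e.
  move: (mdot Yk C1) (mdot C1 M) (mdot C1 C1) (mdot M M) => a b c d; by field.
have qpos : forall N : 'M[R]_(m, n), 0 <= sigma / 2 * mdot N N.
  by move=> N; apply: mulr_ge0; [lra | exact: mdot_ge0].
have keyge : forall E t, aug E (ts E) <= aug E t.
  move=> E t; rewrite !augE (Qlem E t); have := qpos (J (t - ts E)); lra.
have Gadd : forall x y, Ginv (x - y) = Ginv x - Ginv y.
  move=> x y; have := hGinvl (Ginv x - Ginv y); rewrite !raddfB => <-.
  by congr (Ginv (_ - _)); apply: esym; apply: hGinvr.
have G0 : Ginv 0 = 0 by have := Gadd 0 0; rewrite !subrr.
have Gopp : forall x, Ginv (- x) = - Ginv x.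
  by move=> x; have := Gadd 0 x; rewrite sub0r G0 sub0r.
have tauhE : tauh = ts Ek by apply: esym; apply: (htauh.2 (ts Ek)); exact: keyge.
have hE : forall E, aug E tauh = aug E (ts E) + sigma / 2 * Tn (E - Ek) 0.
  move=> E; rewrite !augE tauhE (Qlem E (ts Ek)) /Tn mdot0r addr0.
  have e1 : Ek - u - (E - u) = - (E - Ek) by apply/matrixP=> i j; rewrite !mxE; ring.
  have -> : ts Ek - ts E = - Ginv (Jadj (E - Ek)).
    by rewrite /ts -Gadd -(raddfB Jadj) e1 raddfN Gopp.
  rewrite raddfN mdotNl mdotNr opprK.
  have -> : mdot (J (Ginv (Jadj (E - Ek)))) (J (Ginv (Jadj (E - Ek))))
     = mdot (E - Ek) (J (Ginv (Jadj (E - Ek)))) by rewrite [RHS]mdotC !hadj hGinvr.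
  ring.
have Tn0 : forall E t, Tn E t = Tn E 0 by move=> E t; rewrite /Tn !mdot0r.
have Fge : forall E t, aug E tauh <= aug E t + sigma / 2 * Tn (E - Ek) (t - tauk).
  by move=> E t; rewrite hE Tn0 lerD2r keyge.
have Fle : aug E1 tau1 + sigma / 2 * Tn (E1 - Ek) (tau1 - tauk) <= aug E1 tauh.
  by rewrite hE Tn0 lerD2r; exact: htau1.1.
split.
  move=> [E t] /=; apply: le_trans Fle _; apply: le_trans (Fge E t); exact: hE1.1.
move=> [E t] /= hle.
have eE : E = E1 by apply: hE1.2; exact: le_trans (Fge E t) (le_trans hle Fle).
subst E; congr pair; apply: htau1.2.
by move: hle; rewrite (Tn0 _ (t - tauk)) (Tn0 _ (tau1 - tauk)) lerD2r.
Qed.
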